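(* Let $C>0$, let $\mathcal F$ satisfy realizability, and suppose the event holds that $\sum_{t=\tau_1}^{\tau_2}\mathbb E_t[M_t(f)]\le2\sum_{t=\tau_1}^{\tau_2}M_t(f)+C$ for all $f\in\mathcal F$ and $1\le\tau_1\le\tau_2\le T$. Then for all $2\le k\le m\le M$: (1) $f^\star\in\hat{\mathcal F}_m\big(\frac{C}{2(\tau_m-1)}\big)$; (2) for all $\beta\ge0$, $\hat{\mathcal F}_m(\beta)\subseteq\tilde{\mathcal F}_m\big(2\beta+\frac{C}{\tau_m-1}\big)$; moreover, if the actions are generated by Algorithm 1 with Option II or by Algorithm 2, then $\mathbb E_{\tau_{m-1}}[M_{\tau_{m-1}}(f)]\le\frac{2\beta(\tau_m-1)+C}{T_{m-1}}$ for every $f\in\hat{\mathcal F}_m(\beta)$; (3) for all $\beta\ge0$, $\hat{\mathcal F}_m(\beta)\subseteq\hat{\mathcal F}_k\big(\frac{\tau_m-1}{\tau_k-1}\beta+\frac{C}{\tau_k-1}\big)$; (4) with $\beta_m=\frac{(M-m+1)C}{\tau_m-1}$ and $\mathcal F_m=\hat{\mathcal F}_m(\beta_m)$ for $m\ge2$, $\mathcal F_1=\mathcal F$: $f^\star\in\mathcal F_m$ for all $m$, and $\mathcal F_m\subseteq\mathcal F_{m-1}\subseteq\dots\subseteq\mathcal F_1$.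
   Context: Setting: $\mathcal A=\{1,\dots,K\}$, $D$ a distribution over $(x,r)\in\mathcal X\times[0,1]^K$; in rounds $t=1,\dots,T$, $(x_t,r_t)\sim D$ independently of the past, $a_t$ is chosen from $x_t$, past observations and independent randomness, and only $r_t(a_t)$ is observed. $\mathcal F$ is a class of functions $\mathcal X\times\mathcal A\to[0,1]$; realizability: $f^\star\in\mathcal F$ where $f^\star(x,a)=\mathbb E[r(a)\mid x]$. $\mathcal J_t=\sigma((x_s,a_s,r_s)_{s<t})$, $\mathbb E_t=\mathbb E[\cdot\mid\mathcal J_t]$; $M_t(f)=(f(x_t,a_t)-r_t(a_t))^2-(f^\star(x_t,a_t)-r_t(a_t))^2$. Epochs: epoch $m$ is rounds $\tau_m,\dots,\tau_{m+1}-1$ with $\tau_m=2^{m-1}$, length $T_m=2^{m-1}$; $M$ is the epoch containing $T$. For $m\ge2$: $\hat R_m(f)=\frac1{\tau_m-1}\sum_{s<\tau_m}(f(x_s,a_s)-r_s(a_s))^2$, $\hat{\mathcal F}_m(\beta)=\{f\in\mathcal F:\hat R_m(f)-\min_{f'}\hat R_m(f')\le\beta\}$ (minimum attained), $\tilde{\mathcal F}_m(\beta)=\{f\in\mathcal F:\frac1{\tau_m-1}\sum_{t=1}^{\tau_m-1}\mathbb E_t[M_t(f)]\le\beta\}$; $\hat{\mathcal F}_1(\beta)=\mathcal F$. $\mathrm{High}_{\mathcal F'}(x,a)=\max_{f\in\mathcal F'}f(x,a)$, $\mathrm{Low}_{\mathcal F'}(x,a)=\min_{f\in\mathcal F'}f(x,a)$.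 Algorithm 1 with Option II (tolerances $\beta_m$): in epoch $m$, $\mathcal F_m=\hat{\mathcal F}_m(\beta_m)$, and at each round $t$ of epoch $m$, $a_t\sim\mathrm{Unif}(A_t)$ with $A_t=\{a:\mathrm{High}_{\mathcal F_m}(x_t,a)\ge\max_{a'}\mathrm{Low}_{\mathcal F_m}(x_t,a')\}$. Algorithm 2 (warm start $M_0$): uniform actions for $t<\tau_{M_0}$; in epochs $m\ge M_0$, $\mathcal F_m=\hat{\mathcal F}_m(\beta_m)$ and $a_t\in\arg\max_a\mathrm{High}_{\mathcal F_m}(x_t,a)$. *)

(* Defs.v *)
From HB Require Import structures.
From mathcomp Require Import all_boot all_order all_algebra.
Set Implicit Arguments. Unset Strict Implicit. Unset Printing Implicit Defensive.
Import Order.TTheory GRing.Theory Num.Theory.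
Local Open Scope ring_scope.

(* tau m = 2^(m-1) : first round of epoch m;  Tlen m = 2^(m-1) : length of epoch m *)
Definition tau (m : nat) : nat := (2 ^ m.-1)%N.
Definition Tlen (m : nat) : nat := (2 ^ m.-1)%N.

Definition bounded_on (T : Type) (R : realFieldType) (S : T -> Prop) (h : T -> R) : Prop :=
  exists B : R, forall t, S t -> `|h t| <= B.

(* E is the expectation operator of a probability distribution supported on S,
   acting on (real valued) functions bounded on S. *)
Definition is_expect_on (T : Type) (R : realFieldType) (S : T -> Prop) (E : (T -> R) -> R) : Prop :=
  [/\ (forall h g, bounded_on S h -> bounded_on S g -> E (fun t => h t + g t) = E h + E g),
      (forall (c : R) h, bounded_on S h -> E (fun t => c * h t) = c * E h),
      (forall h g, bounded_on S h -> bounded_on S g -> (forall t, S t -> h t <= g t) -> E h <= E g)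
    & E (fun _ => 1) = 1].

Definition unit_cube (R : realFieldType) (K : nat) (rr : 'I_K -> R) : Prop :=
  forall b, 0 <= rr b <= 1.

Definition sqloss (R : realFieldType) (X : Type) (K : nat)
  (f : X -> 'I_K -> R) (z : X) (b : 'I_K) (rr : 'I_K -> R) : R := (f z b - rr b) ^+ 2.

Definition Mt (R : realFieldType) (X : Type) (K : nat) (fstar : X -> 'I_K -> R)
  (x : nat -> X) (a : nat -> 'I_K) (r : nat -> 'I_K -> R) (f : X -> 'I_K -> R) (t : nat) : R :=
  sqloss f (x t) (a t) (r t) - sqloss fstar (x t) (a t) (r t).

(* E_t[M_t(f)]: (x_t,r_t) ~ D (marginal EX on contexts, conditional ER z on reward
   vectors given context z), a_t ~ pol t x_t (the conditional law of a_t given the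
   history J_t and x_t), a_t independent of r_t given (J_t, x_t). *)
Definition Et (R : realFieldType) (X : Type) (K : nat) (EX : (X -> R) -> R)
  (ER : X -> (('I_K -> R) -> R) -> R) (pol : nat -> X -> 'I_K -> R)
  (fstar : X -> 'I_K -> R) (f : X -> 'I_K -> R) (t : nat) : R :=
  EX (fun z => \sum_(b < K) pol t z b *
                 ER z (fun rr => sqloss f z b rr - sqloss fstar z b rr)).

Definition Rhat (R : realFieldType) (X : Type) (K : nat)
  (x : nat -> X) (a : nat -> 'I_K) (r : nat -> 'I_K -> R) (m : nat) (f : X -> 'I_K -> R) : R :=
  ((tau m - 1)%:R)^-1 * \sum_(1 <= s < tau m) sqloss f (x s) (a s) (r s).

(* \hat F_m(beta); \hat F_1(beta) = F.  "Rhat f - min Rhat <= beta" written as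
   "Rhat f - Rhat f' <= beta for every f' in F" (the minimum being attained). *)
Definition Fhat (R : realFieldType) (X : Type) (K : nat) (F : (X -> 'I_K -> R) -> Prop)
  (x : nat -> X) (a : nat -> 'I_K) (r : nat -> 'I_K -> R) (m : nat) (beta : R)
  (f : X -> 'I_K -> R) : Prop :=
  F f /\ ((2 <= m)%N -> forall f', F f' -> Rhat x a r m f - Rhat x a r m f' <= beta).

Definition Ftilde (R : realFieldType) (X : Type) (K : nat) (F : (X -> 'I_K -> R) -> Prop)
  (EX : (X -> R) -> R) (ER : X -> (('I_K -> R) -> R) -> R) (pol : nat -> X -> 'I_K -> R)
  (fstar : X -> 'I_K -> R) (m : nat) (beta : R) (f : X -> 'I_K -> R) : Prop :=
  F f /\ ((tau m - 1)%:R)^-1 * \sum_(1 <= t < tau m) Et EX ER pol fstar f t <= beta.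

Definition is_High (R : realFieldType) (X : Type) (K : nat)
  (G : (X -> 'I_K -> R) -> Prop) (hi : X -> 'I_K -> R) : Prop :=
  forall z b, (exists f, G f /\ f z b = hi z b) /\ (forall f, G f -> f z b <= hi z b).
Definition is_Low (R : realFieldType) (X : Type) (K : nat)
  (G : (X -> 'I_K -> R) -> Prop) (lo : X -> 'I_K -> R) : Prop :=
  forall z b, (exists f, G f /\ f z b = lo z b) /\ (forall f, G f -> lo z b <= f z b).

Definition Aset (R : realFieldType) (X : Type) (K : nat)
  (hi lo : X -> 'I_K -> R) (z : X) : {set 'I_K} :=
  [set b : 'I_K | [forall b' : 'I_K, lo z b' <= hi z b]].

(* The conditional action distributions pol are those of Algorithm 1 with
   Option II run with tolerances betas:  F_m = \hat F_m(betas m) (F_1 = F), and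
   in every round t of epoch m, a_t ~ Unif(A_t). *)
Definition alg1_opt2 (R : realFieldType) (X : Type) (K : nat) (F : (X -> 'I_K -> R) -> Prop)
  (x : nat -> X) (a : nat -> 'I_K) (r : nat -> 'I_K -> R) (betas : nat -> R)
  (pol : nat -> X -> 'I_K -> R) : Prop :=
  exists hi lo : nat -> X -> 'I_K -> R,
    [/\ (forall m, (1 <= m)%N -> is_High (Fhat F x a r m (betas m)) (hi m)),
        (forall m, (1 <= m)%N -> is_Low (Fhat F x a r m (betas m)) (lo m))
      & (forall m t, (1 <= m)%N -> (tau m <= t < tau m.+1)%N -> forall z b,
           pol t z b = if b \in Aset (hi m) (lo m) z
                       then (#|Aset (hi m) (lo m) z|%:R)^-1 else 0)].

(* Algorithm 2 with warm start M0 and tolerances betas: uniform actions for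
   t < tau M0; in epochs m >= M0, a_t = sel m x_t, an action maximizing
   High_{F_m}(x_t, .) (sel is the fixed tie-breaking rule of epoch m). *)
Definition alg2 (R : realFieldType) (X : Type) (K : nat) (F : (X -> 'I_K -> R) -> Prop)
  (x : nat -> X) (a : nat -> 'I_K) (r : nat -> 'I_K -> R) (betas : nat -> R)
  (pol : nat -> X -> 'I_K -> R) : Prop :=
  exists (M0 : nat) (hi : nat -> X -> 'I_K -> R) (sel : nat -> X -> 'I_K),
    [/\ (1 <= M0)%N,
        (forall m, (M0 <= m)%N -> is_High (Fhat F x a r m (betas m)) (hi m)),
        (forall m z b, (M0 <= m)%N -> hi m z b <= hi m z (sel m z)),
        (forall t, (1 <= t < tau M0)%N -> forall z b, pol t z b = (K%:R)^-1)
      & (forall m t, (M0 <= m)%N -> (tau m <= t < tau m.+1)%N -> forall z b,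
           pol t z b = (b == sel m z)%:R)].

(* Main.v *)
Require Import Defs.
From HB Require Import structures.
From mathcomp Require Import all_boot all_order all_algebra ring lra zify.
From Stdlib Require Import FunctionalExtensionality.
Import Order.TTheory GRing.Theory Num.Theory.
Local Open Scope ring_scope.

Lemma ER_diff (R : realFieldType) (K : nat) (E : (('I_K -> R) -> R) -> R) (b : 'I_K) (c d : R) :
  is_expect_on (@unit_cube R K) E -> d = E (fun rr => rr b) ->
  E (fun rr => (c - rr b)^+2 - (d - rr b)^+2) = (c - d)^+2.
Proof.
case=> Hadd Hmul _ H1 Hd.
have -> : (fun rr : 'I_K -> R => (c - rr b)^+2 - (d - rr b)^+2) =
  (fun rr => (fun rr => (c^+2 - d^+2) * (fun _ => 1) rr) rr +
             (fun rr => (2 * (d - c)) * (fun rr : 'I_K -> R => rr b) rr) rr).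
  by apply: functional_extensionality => rr /=; ring.
have bc : forall k : R, bounded_on (@unit_cube R K) (fun _ => k).
  by move=> k; exists `|k| => t _.
have bb : bounded_on (@unit_cube R K) (fun rr : 'I_K -> R => rr b).
  exists 1 => t /(_ b) /andP[h0 h1]; by rewrite ger0_norm.
have bm : forall (k : R) (h : ('I_K -> R) -> R), bounded_on (@unit_cube R K) h ->
   bounded_on (@unit_cube R K) (fun t => k * h t).
  move=> k h [B HB]; exists (`|k| * B) => t Ht; rewrite normrM.
  apply: ler_wpM2l => //; exact: HB.
rewrite Hadd; [|exact: bm|exact: bm].
rewrite Hmul // Hmul // H1 -Hd; ring.
Qed.

Lemma Et_eq (R : realFieldType) (X : Type) (K : nat)
  (EX : (X -> R) -> R) (ER : X -> (('I_K -> R) -> R) -> R)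
  (pol : nat -> X -> 'I_K -> R) (fstar f : X -> 'I_K -> R) (t : nat) :
  (forall z, is_expect_on (@unit_cube R K) (ER z)) ->
  (forall z b, fstar z b = ER z (fun rr => rr b)) ->
  Et EX ER pol fstar f t = EX (fun z => \sum_(b < K) pol t z b * (f z b - fstar z b)^+2).
Proof.
move=> HE Hfs; rewrite /Et; congr (EX _); apply: functional_extensionality => z.
apply: eq_bigr => b _; rewrite /sqloss ER_diff //.
Qed.

Lemma Et_ge0 (R : realFieldType) (X : Type) (K : nat)
  (EX : (X -> R) -> R) (ER : X -> (('I_K -> R) -> R) -> R)
  (pol : nat -> X -> 'I_K -> R) (fstar f : X -> 'I_K -> R) (t : nat) :
  is_expect_on (fun _ : X => True) EX ->
  (forall z, is_expect_on (@unit_cube R K) (ER z)) ->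
  (forall z b, fstar z b = ER z (fun rr => rr b)) ->
  (forall z b, 0 <= f z b <= 1) -> (forall z b, 0 <= fstar z b <= 1) ->
  (forall t z b, 0 <= pol t z b) -> (forall t z, \sum_(b < K) pol t z b = 1) ->
  0 <= Et EX ER pol fstar f t.
Proof.
move=> HX HE Hfs Hf Hfs1 Hp0 Hp1; rewrite Et_eq //.
case: HX => _ Hmul Hmon H1.
have H0 : EX (fun z => 0 * (fun _ => 1) z) = 0.
  by rewrite Hmul ?mul0r //; exists 1 => _ _; rewrite normr1.
rewrite -{1}H0.
have sq01 : forall z b, 0 <= (f z b - fstar z b)^+2 <= 1.
  move=> z b; move: (Hf z b) (Hfs1 z b) => /andP[? ?] /andP[? ?].
  apply/andP; split; [exact: sqr_ge0|nra].
apply: Hmon.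
- by exists 0 => z _; rewrite mul0r normr0.
- exists 1 => z _; rewrite ger0_norm; last first.
    by apply: sumr_ge0 => b _; apply: mulr_ge0 => //; case/andP: (sq01 z b).
  rewrite -(Hp1 t z); apply: ler_sum => b _.
  rewrite -[X in _ <= X]mulr1; apply: ler_wpM2l => //; by case/andP: (sq01 z b).
- move=> z _; rewrite mul0r; apply: sumr_ge0 => b _; apply: mulr_ge0 => //.
  by case/andP: (sq01 z b).
Qed.
Theorem mainTheorem15 (R : realFieldType) (X : Type) (K : nat)
  (F : (X -> 'I_K -> R) -> Prop) (fstar : X -> 'I_K -> R)
  (EX : (X -> R) -> R) (ER : X -> (('I_K -> R) -> R) -> R)
  (pol : nat -> X -> 'I_K -> R)
  (x : nat -> X) (a : nat -> 'I_K) (r : nat -> 'I_K -> R)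
  (T M : nat) (C : R) :
  (0 < K)%N ->
  (* the distribution D of (x, r): context marginal EX, conditional reward law ER z *)
  is_expect_on (fun _ : X => True) EX ->
  (forall z, is_expect_on (@unit_cube R K) (ER z)) ->
  (* F is a class of functions X x A -> [0,1] *)
  (forall f, F f -> forall z b, 0 <= f z b <= 1) ->
  (* realizability *)
  F fstar -> (forall z b, fstar z b = ER z (fun rr => rr b)) ->
  (* pol t z is the conditional law of a_t given the history and x_t = z *)
  (forall t z b, 0 <= pol t z b) -> (forall t z, \sum_(b < K) pol t z b = 1) ->
  (forall t, unit_cube (r t)) ->
  (* M is the epoch containing T *)
  (1 <= T)%N -> (1 <= M)%N -> (tau M <= T < tau M.+1)%N ->
  0 < C ->
  (* the event *)
  (forall f, F f -> forall t1 t2 : nat, (1 <= t1)%N -> (t1 <= t2)%N -> (t2 <= T)%N ->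
     \sum_(t1 <= t < t2.+1) Et EX ER pol fstar f t
       <= 2 * \sum_(t1 <= t < t2.+1) Mt fstar x a r f t + C) ->
  (forall k m : nat, (2 <= k)%N -> (k <= m)%N -> (m <= M)%N ->
     [/\ (* (1) *)
         Fhat F x a r m (C / (2 * (tau m - 1)%:R)) fstar,
         (* (2) *)
         (forall beta, 0 <= beta ->
            (forall f, Fhat F x a r m beta f ->
               Ftilde F EX ER pol fstar m (2 * beta + C / (tau m - 1)%:R) f) /\
            (((exists betas, alg1_opt2 F x a r betas pol) \/
              (exists betas, alg2 F x a r betas pol)) ->
             forall f, Fhat F x a r m beta f ->
               Et EX ER pol fstar f (tau m.-1)
                 <= (2 * beta * (tau m - 1)%:R + C) / (Tlen m.-1)%:R))
       & (* (3) *)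
         (forall beta, 0 <= beta -> forall f, Fhat F x a r m beta f ->
            Fhat F x a r k ((tau m - 1)%:R / (tau k - 1)%:R * beta + C / (tau k - 1)%:R) f)])
  /\
  (* (4) with beta_m = (M - m + 1) C / (tau_m - 1), F_m = \hat F_m(beta_m), F_1 = F *)
  ((forall m : nat, (1 <= m)%N -> (m <= M)%N ->
      Fhat F x a r m ((M - m + 1)%:R * C / (tau m - 1)%:R) fstar) /\
   (forall k m : nat, (1 <= k)%N -> (k <= m)%N -> (m <= M)%N -> forall f,
      Fhat F x a r m ((M - m + 1)%:R * C / (tau m - 1)%:R) f ->
      Fhat F x a r k ((M - k + 1)%:R * C / (tau k - 1)%:R) f)).
Proof.
move=> K0 HX HE HF Fs Hfs Hp0 Hp1 Hr T1 M1 /andP[TM TM1] C0 Hev.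
have Fs01 := HF _ Fs.
have Etp : forall f, F f -> forall t, 0 <= Et EX ER pol fstar f t.
  by move=> f Ff t; apply: Et_ge0 => //; exact: HF.
have tau1 : forall m, (1 <= tau m)%N by move=> m; rewrite /tau expn_gt0.
have taumono : forall k m, (k <= m)%N -> (tau k <= tau m)%N.
  move=> k m km; rewrite /tau leq_pexp2l //; lia.
have tau2 : forall m, (2 <= m)%N -> (2 <= tau m)%N.
  by case=> [|[|m]] //= _; rewrite /tau /= expnS; have := expn_gt0 2 m; lia.
have tault : forall m, (2 <= m)%N -> (tau m.-1 < tau m)%N.
  by case=> [|[|m]] //= _; rewrite /tau /= expnS; have := expn_gt0 2 m; lia.
have taudiff : forall m, (2 <= m)%N -> (tau m - tau m.-1)%N = Tlen m.-1.
  by case=> [|[|m]] //= _; rewrite /tau /Tlen /= expnS; lia.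
have nz : forall m, (2 <= m)%N -> 0 < (tau m - 1)%:R :> R.
  by move=> m m2; rewrite ltr0n; have := tau2 m m2; lia.
have ev : forall f, F f -> forall lo hi, (1 <= lo)%N -> (lo <= hi)%N -> (hi <= T.+1)%N ->
   \sum_(lo <= t < hi) Et EX ER pol fstar f t
     <= 2 * \sum_(lo <= t < hi) Mt fstar x a r f t + C.
  move=> f Ff lo hi l1 lh hT.
  case: (ltnP lo hi) => lh'; last first.
    by rewrite !big_geq // mulr0 add0r ltW.
  have := Hev f Ff lo hi.-1 l1 _ _; rewrite prednK; last by lia.
  by apply; lia.
have evn : forall f, F f -> forall lo hi, (1 <= lo)%N -> (lo <= hi)%N -> (hi <= T.+1)%N ->
   -C <= 2 * \sum_(lo <= t < hi) Mt fstar x a r f t.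
  move=> f Ff lo hi l1 lh hT; have := ev f Ff lo hi l1 lh hT.
  have : 0 <= \sum_(lo <= t < hi) Et EX ER pol fstar f t.
    by apply: sumr_ge0 => t _; exact: Etp.
  lra.
have tauT : forall m, (m <= M)%N -> (tau m <= T)%N.
  by move=> m mM; apply: leq_trans TM; exact: taumono.
have Dfs : forall m, \sum_(1 <= s < tau m) Mt fstar x a r fstar s = 0.
  by move=> m; apply: big1 => s _; rewrite /Mt subrr.
have Rd : forall m f g, Rhat x a r m f - Rhat x a r m g =
   ((tau m - 1)%:R)^-1 * (\sum_(1 <= s < tau m) Mt fstar x a r f s
                          - \sum_(1 <= s < tau m) Mt fstar x a r g s).
  move=> m f g; rewrite /Rhat -mulrBr; congr (_ * _).
  rewrite -!sumrB; apply: eq_bigr => s _; rewrite /Mt; ring.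
have Dup : forall m beta f, (2 <= m)%N -> Fhat F x a r m beta f ->
   \sum_(1 <= s < tau m) Mt fstar x a r f s <= (tau m - 1)%:R * beta.
  move=> m beta f m2 [Ff Hf]; have := Hf m2 fstar Fs; rewrite Rd Dfs subr0 => h.
  have nz0 : (tau m - 1)%:R != 0 :> R by rewrite gt_eqF // nz.
  rewrite -(mulVKf nz0 (\sum_(1 <= s < tau m) Mt fstar x a r f s)).
  by apply: ler_wpM2l => //; apply: ltW; exact: nz.
have Dlow : forall m f, (2 <= m)%N -> (m <= M)%N -> F f ->
   -C <= 2 * \sum_(1 <= s < tau m) Mt fstar x a r f s.
  move=> m f m2 mM Ff; apply: evn => //; have := tauT m mM; lia.
have mono : forall m b b' f, b <= b' -> Fhat F x a r m b f -> Fhat F x a r m b' f.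
  move=> m b b' f bb [Ff Hf]; split => // m2 f' Ff'.
  exact: le_trans (Hf m2 f' Ff') bb.
have P3 : forall k m, (2 <= k)%N -> (k <= m)%N -> (m <= M)%N ->
  forall beta, 0 <= beta -> forall f, Fhat F x a r m beta f ->
   Fhat F x a r k ((tau m - 1)%:R / (tau k - 1)%:R * beta + C / (tau k - 1)%:R) f.
  move=> k m k2 km mM beta b0 f Hf; have Ff := Hf.1; split => // _ f' Ff'.
  rewrite Rd.
  have -> : (tau m - 1)%:R / (tau k - 1)%:R * beta + C / (tau k - 1)%:R
        = ((tau k - 1)%:R)^-1 * ((tau m - 1)%:R * beta + C) :> R by ring.
  apply: ler_wpM2l; first by rewrite invr_ge0 ltW // nz.
  have h1 := Dup m beta f (leq_trans k2 km) Hf.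
  have h2 := Dlow k f' k2 (leq_trans km mM) Ff'.
  rewrite (big_cat_nat _ (n := tau k)) /= in h1; [|exact: tau1|exact: taumono].
  have h3 := evn f Ff (tau k) (tau m) (tau1 k) (taumono _ _ km)
     (leq_trans (tauT m mM) (leqnSn T)).
  lra.
split.
  move=> k m k2 km mM; have m2 : (2 <= m)%N by lia.
  have n0 := nz m m2.
  have nz0 : (tau m - 1)%:R != 0 :> R by rewrite gt_eqF.
  split.
  - split => // _ f' Ff'; rewrite Rd Dfs sub0r.
    have -> : C / (2 * (tau m - 1)%:R) = ((tau m - 1)%:R)^-1 * (C / 2) :> R.
      by rewrite invfM; ring.
    apply: ler_wpM2l; first by rewrite invr_ge0 ltW.
    have := Dlow m f' m2 mM Ff'; lra.
  - move=> beta b0; split.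
      move=> f Hf; have Ff := Hf.1; split => //.
      have h1 := Dup m beta f m2 Hf.
      have h2 := ev f Ff 1 (tau m) isT (tau1 m) (leq_trans (tauT m mM) (leqnSn T)).
      have -> : 2 * beta + C / (tau m - 1)%:R
            = ((tau m - 1)%:R)^-1 * (2 * (tau m - 1)%:R * beta + C) :> R by field.
      apply: ler_wpM2l; first by rewrite invr_ge0 ltW.
      lra.
    move=> Halg f Hf; have Ff := Hf.1.
    set t0 := tau m.-1.
    have pc : forall t, (t0 <= t < tau m)%N -> pol t = pol t0.
      move=> t /andP[h1 h2].
      have em : tau m = tau m.-1.+1 by rewrite prednK //; lia.
      have tlt : (t0 < tau m)%N.
        exact: tault.
      have r1 : (tau m.-1 <= t < tau m.-1.+1)%N by rewrite -em; apply/andP; split.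
      have r0 : (tau m.-1 <= t0 < tau m.-1.+1)%N by rewrite -em; apply/andP; split.
      have m1 : (1 <= m.-1)%N by lia.
      case: Halg => [[betas [hi [lo [_ _ Hpol]]]] | [betas [M0 [hi [sel [M01 _ _ Hu Hs]]]]]].
        apply: functional_extensionality => z; apply: functional_extensionality => b.
        by rewrite (Hpol m.-1 t m1 r1) (Hpol m.-1 t0 m1 r0).
      apply: functional_extensionality => z; apply: functional_extensionality => b.
      case: (leqP M0 m.-1) => hM.
        by rewrite (Hs m.-1 t hM r1) (Hs m.-1 t0 hM r0).
      have hm : (tau m <= tau M0)%N by apply: taumono; lia.
      have := tau1 m.-1; rewrite -/t0 => ht0.
      rewrite (Hu t) ?(Hu t0) //; apply/andP; split; lia.
    have hsum : \sum_(t0 <= t < tau m) Et EX ER pol fstar f t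
        = (Tlen m.-1)%:R * Et EX ER pol fstar f t0.
      rewrite mulr_natl -(taudiff m m2) -sumr_const_nat; apply: eq_big_nat => t ht.
      by rewrite /Et (pc t ht).
    have ht0 : (1 <= t0 <= tau m)%N.
      by rewrite /t0 tau1 /=; apply: ltnW; exact: tault.
    have hcat : \sum_(1 <= t < tau m) Et EX ER pol fstar f t =
       \sum_(1 <= t < t0) Et EX ER pol fstar f t + \sum_(t0 <= t < tau m) Et EX ER pol fstar f t.
      by case/andP: ht0 => ha hb; rewrite (big_cat_nat _ (n := t0)).
    have h0 : 0 <= \sum_(1 <= t < t0) Et EX ER pol fstar f t.
      by apply: sumr_ge0 => t _; exact: Etp.
    have h1 := Dup m beta f m2 Hf.
    have h2 := ev f Ff 1 (tau m) isT (tau1 m) (leq_trans (tauT m mM) (leqnSn T)).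
    have L0 : 0 < (Tlen m.-1)%:R :> R by rewrite ltr0n /Tlen expn_gt0.
    have Lnz : (Tlen m.-1)%:R != 0 :> R by rewrite gt_eqF.
    rewrite -(mulKf Lnz (Et EX ER pol fstar f t0)) mulrC.
    apply: ler_wpM2r; first by rewrite invr_ge0 ltW.
    rewrite hcat hsum in h2.
    nra.
  - exact: P3.
split.
  move=> m m1 mM; case: (leqP m 1) => hm.
    by split => // h; lia.
  apply: mono _ _ _ _ _ (_ : Fhat F x a r m (C / (2 * (tau m - 1)%:R)) fstar).
    have n0 := nz m hm.
    have -> : C / (2 * (tau m - 1)%:R) = ((tau m - 1)%:R)^-1 * (C / 2) :> R.
      by rewrite invfM; ring.
    have -> : (M - m + 1)%:R * C / (tau m - 1)%:R
        = ((tau m - 1)%:R)^-1 * ((M - m + 1)%:R * C) :> R by ring.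
    apply: ler_wpM2l; first by rewrite invr_ge0 ltW.
    rewrite natrD; have : 0 <= (M - m)%:R :> R by apply: ler0n.
    nra.
  split => // _ f' Ff'; rewrite Rd Dfs sub0r.
  have n0 := nz m hm.
  have -> : C / (2 * (tau m - 1)%:R) = ((tau m - 1)%:R)^-1 * (C / 2) :> R.
    by rewrite invfM; ring.
  apply: ler_wpM2l; first by rewrite invr_ge0 ltW.
  have := Dlow m f' hm mM Ff'; lra.
move=> k m k1 km mM f Hf.
case: (leqP k 1) => hk.
  by split; [exact: Hf.1 | move=> h; lia].
case: (ltnP k m) => hkm; last first.
  by have -> : k = m by lia.
have m2 : (2 <= m)%N by lia.
have nm := nz m m2; have nk := nz k hk.
have nmz : (tau m - 1)%:R != 0 :> R by rewrite gt_eqF.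
have nkz : (tau k - 1)%:R != 0 :> R by rewrite gt_eqF.
apply: mono _ _ _ _ _ (P3 k m hk (ltnW hkm) mM _ _ f Hf); last first.
  apply: mulr_ge0; last by rewrite invr_ge0 ltW.
  by apply: mulr_ge0 => //; apply: ltW.
have -> : (tau m - 1)%:R / (tau k - 1)%:R * ((M - m + 1)%:R * C / (tau m - 1)%:R)
     + C / (tau k - 1)%:R = ((tau k - 1)%:R)^-1 * ((M - m + 1)%:R * C + C) :> R.
  by field; rewrite nkz nmz.
have -> : (M - k + 1)%:R * C / (tau k - 1)%:R
    = ((tau k - 1)%:R)^-1 * ((M - k + 1)%:R * C) :> R by ring.
apply: ler_wpM2l; first by rewrite invr_ge0 ltW.
have hq : (M - m + 1)%:R + 1 <= (M - k + 1)%:R :> R.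
  by rewrite natr1 ler_nat; lia.
nra.
Qed.
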